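(* Let $\mathbf{k}$ be an algebraically closed field, $V=\mathbf{k}^n$, $G=\mathrm{GL}(V)$, $\underline{G}=G\ltimes V$. Let $\lambda[q]$ be an enhanced partition of $n$, $\lambda=(a_1\ge\dots\ge a_t>0)$, let $X$ be nilpotent of Jordan type $\lambda$ with Jordan basis $\{X^kv_i:1\le i\le t,0\le k\le a_i-1\}$ ($X^{a_i}v_i=0$), and put $$\hat w=\sum_{i=1}^{q}\sum_{k=1}^{a_i-1}X^kv_i+\sum_{i=q+1}^{t}\sum_{k=0}^{a_i-1}X^kv_i.$$ Then $\overline{\mathcal{O}_{\lambda[q]}}=\overline{G\cdot(X,\hat w)}$, where $G\cdot(X,\hat w)=\{(gXg^{-1},g\hat w):g\in G\}$.
   Context: $\underline{G}$ is $G\times V$ with product $(g_1,v_1)(g_2,v_2)=(g_1g_2,g_1v_2+v_1)$ and adjoint action $\mathrm{Ad}(g,v)(X,w)=(gXg^{-1},-(gXg^{-1})v+gw)$. Write $\lambda=(b_1^{d_1}\cdots b_r^{d_r})$ with $b_1>\dots>b_r$ (each $b_i$ occurring $d_i>0$ times), $d_0=0$; an enhanced partition $\lambda[q]$ has $q\in\{d_0+\dots+d_{j-1}:1\le j\le r+1\}$. With $u_j=v_{d_1+\dots+d_j}$ ($1\le j\le r$), $u_{r+1}=0$, $\mathcal{O}_{\lambda[q]}$ is the $\underline{G}$-orbit of $(X,u_j)$ where $q=d_0+\dots+d_{j-1}$. Closures are Zariski closures in $\mathfrak{gl}(V)\times V$. *)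

(* Defs.v *)
From HB Require Import structures.
From mathcomp Require Import all_boot all_order all_algebra.
From mathcomp Require Import mpoly.

Set Implicit Arguments.
Unset Strict Implicit.
Unset Printing Implicit Defensive.

Import GRing.Theory.
Local Open Scope ring_scope.

Notation pt k n := ('M[k]_n * 'cV[k]_n)%type.

Definition coords (k : fieldType) (n : nat) (p : pt k n) : 'I_(n * n + n) -> k :=
  fun i => row_mx (mxvec p.1) (p.2)^T 0 i.

Definition zclosure (k : fieldType) (n : nat) (S : pt k n -> Prop) : pt k n -> Prop :=
  fun p => forall P : {mpoly k[n * n + n]},
    (forall x, S x -> P.@[coords x] = 0) -> P.@[coords p] = 0.

(* The orbit of (X,w) under underline{G} = GL(V) |x V with the adjoint action
   Ad(g,v)(X,w) = (gXg^{-1}, -(gXg^{-1})v + gw). *)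
Definition Gbar_orbit (k : fieldType) (n : nat) (X : 'M[k]_n) (w : 'cV[k]_n)
  : pt k n -> Prop :=
  fun p => exists (g : 'M[k]_n) (v : 'cV[k]_n), g \in unitmx /\
    p = (g *m X *m invmx g, - ((g *m X *m invmx g) *m v) + g *m w).

Definition G_orbit (k : fieldType) (n : nat) (X : 'M[k]_n) (w : 'cV[k]_n)
  : pt k n -> Prop :=
  fun p => exists g : 'M[k]_n, g \in unitmx /\ p = (g *m X *m invmx g, g *m w).

Definition is_partition (n : nat) (lam : seq nat) : Prop :=
  sorted geq lam /\ all (fun a => 0 < a)%N lam /\ sumn lam = n.

(* Enhanced partition index (0-indexed parts): q = d_0 + ... + d_{j-1} for some
   1 <= j <= r+1, i.e. q is 0, t, or a position where the part size drops. *)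
Definition enhanced_index (lam : seq nat) (q : nat) : bool :=
  [&& (q <= size lam)%N &
      [|| q == 0%N, q == size lam | nth 0%N lam q.-1 != nth 0%N lam q]].

(* The Jordan family {X^k v_i : 1 <= i <= t, 0 <= k <= a_i - 1}
   (v is 0-indexed: v 0, ..., v (t-1)). *)
Definition jordan_family (k : fieldType) (n : nat) (X : 'M[k]_n)
  (lam : seq nat) (v : nat -> 'cV[k]_n) : seq 'cV[k]_n :=
  flatten [seq [seq (X ^+ j) *m v i | j <- iota 0 (nth 0%N lam i)]
          | i <- iota 0 (size lam)].

Definition jordan_basis (k : fieldType) (n : nat) (X : 'M[k]_n)
  (lam : seq nat) (v : nat -> 'cV[k]_n) : Prop :=
  (forall i, (i < size lam)%N -> (X ^+ (nth 0%N lam i)) *m v i = 0) /\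
  basis_of fullv (jordan_family X lam v).

(* u_j: for q = d_0+...+d_{j-1} < t, the generator v_{d_1+...+d_j}, i.e. the
   last generator among the blocks of size a_{q+1} (1-indexed); 0 if q = t. *)
Definition u_vec (k : fieldType) (n : nat) (lam : seq nat) (v : nat -> 'cV[k]_n)
  (q : nat) : 'cV[k]_n :=
  if (q < size lam)%N then v (q + count (pred1 (nth 0%N lam q)) lam).-1 else 0.

Definition O_enh (k : fieldType) (n : nat) (X : 'M[k]_n) (lam : seq nat)
  (v : nat -> 'cV[k]_n) (q : nat) : pt k n -> Prop :=
  Gbar_orbit X (u_vec lam v q).

Definition w_hat (k : fieldType) (n : nat) (X : 'M[k]_n) (lam : seq nat)
  (v : nat -> 'cV[k]_n) (q : nat) : 'cV[k]_n :=
  \sum_(0 <= i < q) \sum_(1 <= j < nth 0%N lam i) (X ^+ j) *m v i +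
  \sum_(q <= i < size lam) \sum_(0 <= j < nth 0%N lam i) (X ^+ j) *m v i.

(* Main.v *)
Require Import Defs.
From HB Require Import structures.
From mathcomp Require Import all_boot all_order all_algebra.
From mathcomp Require Import mpoly.

Set Implicit Arguments.
Unset Strict Implicit.
Unset Printing Implicit Defensive.
Import GRing.Theory.
Local Open Scope ring_scope.

Lemma poly_of_meval (k : fieldType) N (P : {mpoly k[N]}) (c0 c1 : 'I_N -> k) :
  exists Q : {poly k}, forall t, Q.[t] = P.@[fun i => c0 i + t * c1 i].
Proof.
have H : forall s : seq 'X_{1..N}, exists Q : {poly k}, forall t,
    Q.[t] = \sum_(m <- s) P@_m * \prod_i (c0 i + t * c1 i) ^+ m i.
  elim=> [|m s [Q HQ]].
    by exists 0 => t; rewrite big_nil horner0.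
  exists ((P@_m)%:P * \prod_i ((c0 i)%:P + 'X * (c1 i)%:P) ^+ m i + Q) => t.
  rewrite big_cons hornerD HQ hornerM hornerC horner_prod; congr (_ * _ + _).
  by apply: eq_bigr => i _; rewrite horner_exp hornerD hornerC hornerM hornerX hornerC.
have [Q HQ] := H (msupp P); exists Q => t; by rewrite HQ mevalE.
Qed.

Lemma exists_nonroot (k : closedFieldType) (R : {poly k}) :
  R != 0 -> exists t, R.[t] != 0.
Proof.
move=> R0.
have : size (R * 'X + 1%:P) != 1%N.
  by rewrite size_MXaddC (negbTE R0) /= eqSS size_poly_eq0.
case/closed_rootP => x; rewrite /root hornerD hornerM hornerX hornerC => /eqP Hx.
exists x; apply/negP => /eqP R0x; move: Hx; rewrite R0x mul0r add0r => /eqP.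
by rewrite oner_eq0.
Qed.

Lemma zcl_in (k : fieldType) n (S : pt k n -> Prop) p : S p -> zclosure S p.
Proof. by move=> Sp P HP; apply: HP. Qed.

Lemma zcl_sub (k : fieldType) n (S T : pt k n -> Prop) :
  (forall x, S x -> zclosure T x) -> forall p, zclosure S p -> zclosure T p.
Proof. by move=> ST p Sp P HP; apply: Sp => x /ST; apply. Qed.

Lemma coords_lin (k : fieldType) n (M : 'M[k]_n) (a b : 'cV[k]_n) t i :
  coords (M, a + t *: b) i = coords (M, a) i + t * coords (0, b) i.
Proof.
rewrite /coords /= linearD linearZ /=.
have -> : row_mx (mxvec M) ((a^T) + t *: b^T) =
   row_mx (mxvec M) a^T + t *: row_mx (mxvec (0 : 'M[k]_n)) b^T.
  by rewrite scale_row_mx add_row_mx linear0 scaler0 addr0.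
by rewrite !mxE.
Qed.

Lemma curve (k : closedFieldType) n (S : pt k n -> Prop) (M : 'M[k]_n)
   (a b : 'cV[k]_n) (D : {poly k}) :
  D != 0 -> (forall t, D.[t] != 0 -> S (M, a + t *: b)) -> zclosure S (M, a).
Proof.
move=> D0 HS P HP.
have [Q HQ] := poly_of_meval P (coords (M, a)) (coords (0, b)).
have QD : Q * D = 0.
  apply/eqP; apply/negPn/negP => /exists_nonroot [t]; rewrite hornerM.
  have [Dt|Dt] := eqVneq D.[t] 0; first by rewrite Dt mulr0 eqxx.
  rewrite HQ -(meval_eq _ (coords_lin M a b t)) HP ?mul0r ?eqxx //.
  exact: HS.
have Q0 : Q = 0 by move/eqP: QD; rewrite mulf_eq0 (negbTE D0) orbF => /eqP.
have := HQ 0; rewrite Q0 horner0 => ->.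
by apply: meval_eq => i; rewrite mul0r addr0.
Qed.

Lemma char_poly_eval (k : fieldType) n (h : 'M[k]_n) t :
  (char_poly (- h)).[t] = \det (h + t%:M).
Proof.
rewrite /char_poly.
have -> : (\det (char_poly_mx (- h))).[t] = horner_eval t (\det (char_poly_mx (- h))) by [].
rewrite -det_map_mx; congr (\det _).
apply/matrixP => i j; rewrite !mxE /=.
rewrite horner_evalE.
rewrite hornerD hornerN hornerMn hornerX hornerC addrC opprK.
by case: (i == j).
Qed.

Lemma curveC (k : closedFieldType) n (S : pt k n -> Prop) (X h : 'M[k]_n)
   (w1 : 'cV[k]_n) :
  h *m X = X *m h ->
  (forall g, g \in unitmx -> S (g *m X *m invmx g, g *m w1)) ->
  forall g, g \in unitmx -> zclosure S (g *m X *m invmx g, g *m (h *m w1)).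
Proof.
move=> hX HS g gU.
apply: (@curve _ _ _ _ _ (g *m w1) (char_poly (- h))).
  by rewrite -size_poly_eq0 size_char_poly.
move=> t Dt.
set ht := h + t%:M.
have htU : ht \in unitmx by rewrite unitmxE unitfE -char_poly_eval.
have GU : g *m ht \in unitmx by rewrite unitmx_mul gU htU.
have htX : ht *m X = X *m ht.
  by rewrite /ht mulmxDl mulmxDr hX mul_scalar_mx mul_mx_scalar.
have := HS _ GU.
have -> : g *m ht *m X *m invmx (g *m ht) = g *m X *m invmx g.
  have E : g *m ht *m X = g *m X *m invmx g *m (g *m ht).
    by rewrite -!mulmxA htX [invmx g *m _]mulmxA mulVmx // mul1mx.
  by rewrite E mulmxK.
rewrite /ht.
by rewrite mulmxDr mulmxDl !mulmxA mul_mx_scalar scalemxAl.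
Qed.

Lemma flat_idx (T : Type) (x0 : T) (s : seq nat) (a : nat -> nat) i j :
  i \in s -> (j < a i)%N -> exists l, forall f : nat -> nat -> T,
   (l < size (flatten [seq [seq f i0 j0 | j0 <- iota 0 (a i0)] | i0 <- s]))%N /\
   nth x0 (flatten [seq [seq f i0 j0 | j0 <- iota 0 (a i0)] | i0 <- s]) l = f i j.
Proof.
elim: s => [//|i' s IH]; rewrite inE => Hi Hj.
have [ei|nei] := eqVneq i i'.
  subst i'; exists j => f; rewrite /= size_cat nth_cat size_map size_iota Hj.
  by rewrite (nth_map 0%N) ?size_iota // nth_iota // add0n ltn_addr.
have {}Hi : i \in s by move: Hi; rewrite (negbTE nei).
have [l Hl] := IH Hi Hj; exists (a i' + l)%N => f.
have [H1 H2] := Hl f.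
by rewrite /= size_cat nth_cat size_map size_iota ltn_add2l H1 ltnNge leq_addr /= addKn.
Qed.

Lemma exprSm (k : pzRingType) m (A : 'M[k]_m) j : A ^+ j.+1 = A *m A ^+ j.
Proof. exact: exprS. Qed.

Lemma exprSmr (k : pzRingType) m (A : 'M[k]_m) j : A ^+ j.+1 = A ^+ j *m A.
Proof. exact: exprSr. Qed.

Lemma exprDm (k : pzRingType) m (A : 'M[k]_m) i j : A ^+ (i + j) = A ^+ i *m A ^+ j.
Proof. exact: exprD. Qed.

Section Lin.
Variables (k : fieldType) (n : nat) (X : 'M[k]_n) (lam : seq nat) (v : nat -> 'cV[k]_n).

Lemma memF x : x \in jordan_family X lam v ->
  exists i j, [/\ (i < size lam)%N, (j < nth 0%N lam i)%N & x = X ^+ j *m v i].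
Proof.
case/flattenP => s /mapP [i]; rewrite mem_iota add0n => /andP [_ Hi] -> /mapP [j].
by rewrite mem_iota add0n => /andP [_ Hj] ->; exists i, j.
Qed.

Lemma idxF (y : nat -> 'cV[k]_n) i j : (i < size lam)%N -> (j < nth 0%N lam i)%N ->
  exists l, [/\ (l < size (jordan_family X lam v))%N,
     nth 0 (jordan_family X lam v) l = X ^+ j *m v i &
     nth 0 (jordan_family X lam y) l = X ^+ j *m y i].
Proof.
move=> Hi Hj.
have Hi' : i \in iota 0 (size lam) by rewrite mem_iota.
have [l Hl] := @flat_idx _ (0 : 'cV[k]_n) _ (fun i => nth 0%N lam i) _ _ Hi' Hj.
exists l; have [H1 H2] := Hl (fun i j => X ^+ j *m v i).
by have [_ H3] := Hl (fun i j => X ^+ j *m y i).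
Qed.

Hypothesis B : basis_of fullv (jordan_family X lam v).

Lemma extF (A C : 'M[k]_n) :
  (forall i j, (i < size lam)%N -> (j < nth 0%N lam i)%N ->
      A *m (X ^+ j *m v i) = C *m (X ^+ j *m v i)) -> A = C.
Proof.
move=> H.
have Hx : forall x : 'cV[k]_n, A *m x = C *m x.
  move=> x; set T := in_tuple (jordan_family X lam v).
  have xs : x \in span T.
    by case/andP: B => /eqP -> _; exact: memvf.
  rewrite (coord_span xs) !mulmx_sumr; apply: eq_bigr => l _.
  rewrite -!scalemxAr; congr (_ *: _).
  have : T`_l \in jordan_family X lam v by apply: mem_nth; exact: ltn_ord.
  by case/memF => i [j [Hi Hj ->]]; apply: H.
apply/matrixP => r c.
have := congr1 (fun M : 'cV[k]_n => M r 0) (Hx (delta_mx c 0)).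
by rewrite -!colE !mxE.
Qed.

Lemma ext_exists (y : nat -> 'cV[k]_n) :
  (forall i, (i < size lam)%N -> 0 < nth 0%N lam i)%N ->
  (forall i, (i < size lam)%N -> X ^+ (nth 0%N lam i) *m v i = 0) ->
  (forall i, (i < size lam)%N -> X ^+ (nth 0%N lam i) *m y i = 0) ->
  exists H : 'M[k]_n, H *m X = X *m H /\ forall i, (i < size lam)%N -> H *m v i = y i.
Proof.
move=> Pos Hv Hy.
set F := jordan_family X lam v; set Y := jordan_family X lam y.
set T := in_tuple F.
pose crow (l : 'I_(size F)) : 'rV[k]_n := \row_c coord T l (delta_mx c 0).
pose H := \sum_(l < size F) Y`_l *m crow l.
have crowE : forall l x, crow l *m x = (coord T l x)%:M.
  move=> l x; apply/matrixP => a b; rewrite !ord1 !mxE /=.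
  rewrite [in RHS](matrix_sum_delta x) linear_sum /=.
  apply: eq_bigr => c _; rewrite big_ord1 linearZ /= !mxE mulrC.
  by [].
have HxE : forall x, H *m x = \sum_(l < size F) coord T l x *: Y`_l.
  move=> x; rewrite /H mulmx_suml; apply: eq_bigr => l _.
  by rewrite -mulmxA crowE mul_mx_scalar.
have freeF : free T by case/andP: B.
have HF : forall l : 'I_(size F), H *m F`_l = Y`_l.
  move=> l; rewrite HxE.
  have -> : F`_l = T`_l by [].
  rewrite (bigD1 l) //= coord_free // eqxx scale1r big1 ?addr0 // => l' nl.
  by rewrite coord_free // eq_sym (negbTE nl) scale0r.
have Hij : forall i j, (i < size lam)%N -> (j < nth 0%N lam i)%N ->
    H *m (X ^+ j *m v i) = X ^+ j *m y i.
  move=> i j Hi Hj; have [l [Hl E1 E2]] := idxF y Hi Hj.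
  by have := HF (Ordinal Hl); rewrite /= E1 E2.
exists H; split; last first.
  move=> i Hi; have Hpos : (0 < nth 0%N lam i)%N by apply: Pos.
  by have := Hij i 0%N Hi Hpos; rewrite !expr0 !mul1mx.
apply: extF => i j Hi Hj.
have -> : H *m X *m (X ^+ j *m v i) = H *m (X ^+ j.+1 *m v i).
  by rewrite exprSm !mulmxA.
rewrite -[X *m H *m _]mulmxA [H *m (X ^+ j *m _)]Hij //.
have [lt|ge] := ltnP j.+1 (nth 0%N lam i).
  by rewrite Hij // exprSm mulmxA.
have ej : j.+1 = nth 0%N lam i by apply/eqP; rewrite eqn_leq Hj ge.
by rewrite [RHS]mulmxA -exprSm ej Hv // Hy // mulmx0.
Qed.

End Lin.

Lemma sum_single (V : nmodType) (a b i0 : nat) (F : nat -> V) :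
  (a <= i0 < b)%N -> (forall i, (a <= i < b)%N -> i != i0 -> F i = 0) ->
  \sum_(a <= i < b) F i = F i0.
Proof.
move=> Hi0 H.
rewrite (bigD1_seq i0) ?mem_index_iota ?iota_uniq //= big1_seq ?addr0 //.
by move=> i /andP [ne]; rewrite mem_index_iota => Hi; apply: H.
Qed.

Lemma sum_zero (V : nmodType) (a b : nat) (F : nat -> V) :
  (forall i, (a <= i < b)%N -> F i = 0) -> \sum_(a <= i < b) F i = 0.
Proof.
move=> H; rewrite big_seq big1 // => i; rewrite mem_index_iota; exact: H.
Qed.

Lemma commX (k : pzRingType) m (H X : 'M[k]_m) j :
  H *m X = X *m H -> H *m X ^+ j = X ^+ j *m H.
Proof.
move=> HX; elim: j => [|j IH]; first by rewrite expr0 mul1mx mulmx1.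
by rewrite exprSmr mulmxA IH -!mulmxA HX.
Qed.

Lemma commX_sum (k : pzRingType) m (H X : 'M[k]_m) (w : 'cV[k]_m) a b :
  H *m X = X *m H ->
  H *m (\sum_(a <= j < b) X ^+ j *m w) = \sum_(a <= j < b) X ^+ j *m (H *m w).
Proof.
move=> HX; rewrite mulmx_sumr; apply: eq_bigr => j _.
by rewrite mulmxA commX // mulmxA.
Qed.

Lemma tele (k : pzRingType) m (X : 'M[k]_m) (y : 'cV[k]_m) a :
  \sum_(0 <= j < a) X ^+ j *m (y - X *m y) = y - X ^+ a *m y.
Proof.
elim: a => [|a IH]; first by rewrite big_geq // expr0 mul1mx subrr.
rewrite big_nat_recr //= IH mulmxBr mulmxA -exprSmr.
by rewrite addrA subrK.
Qed.

Lemma tele1 (k : pzRingType) m (X : 'M[k]_m) (y : 'cV[k]_m) a : (0 < a)%N ->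
  \sum_(1 <= j < a) X ^+ j *m (y - X *m y) = X *m y - X ^+ a *m y.
Proof.
move=> a0; have := tele X y a; rewrite big_ltn // expr0 mul1mx => E.
apply: (@addrI _ (y - X *m y)); rewrite E.
by rewrite addrA subrK.
Qed.

Lemma geq_trans : transitive geq.
Proof. by move=> a b c ba cb; apply: leq_trans cb ba. Qed.

Lemma prefix_count (s : seq nat) x : path geq x s -> (0 < count (pred1 x) s)%N ->
  nth 0%N s (count (pred1 x) s).-1 = x.
Proof.
elim: s => [//|y s IH] /= /andP [xy ps].
have [exy|nxy] := eqVneq y x.
  subst y => /= _; rewrite add0n.
  case c: (count (pred1 x) s) => [//|c'] /=.
  by rewrite -[c']/(c'.+1.-1) -c IH ?c.
rewrite add0n => c0.
have : all (geq y) s by apply: (order_path_min geq_trans ps).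
have ltyx : (y < x)%N by rewrite ltn_neqAle nxy xy.
move/allP => H; move: c0; rewrite -has_count => /hasP [z zs /eqP ezx].
by have := H _ zs; rewrite /= ezx leqNgt ltyx.
Qed.

Section Main.
Variables (k : fieldType) (n : nat) (lam : seq nat) (q : nat) (X : 'M[k]_n)
  (v : nat -> 'cV[k]_n).
Hypotheses (Hpart : is_partition n lam) (Hq : enhanced_index lam q)
  (HJ : jordan_basis X lam v).

Local Notation t := (size lam).
Local Notation a i := (nth 0%N lam i).

Lemma posl i : (i < t)%N -> (0 < a i)%N.
Proof. by case: Hpart => _ [/all_nthP H _]; apply: H. Qed.

Lemma sortl i j : (i <= j)%N -> (j < t)%N -> (a j <= a i)%N.
Proof.
move=> ij jt; case: Hpart => S _.
have := @sorted_leq_nth _ geq geq_trans leqnn 0%N _ S i j.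
by rewrite !inE; apply => //; apply: leq_ltn_trans jt.
Qed.

Lemma Hv i : (i < t)%N -> X ^+ a i *m v i = 0.
Proof. by case: HJ => H _; apply: H. Qed.

Lemma kill i b j : (i < t)%N -> (a i <= b)%N -> X ^+ b *m (X ^+ j *m v i) = 0.
Proof.
move=> it ab.
rewrite mulmxA -exprDm.
have -> : (b + j = (j + (b - a i)) + a i)%N by rewrite -addnA subnK // addnC.
by rewrite exprDm -mulmxA Hv // mulmx0.
Qed.

Lemma Xzero : (0 < t)%N -> X ^+ a 0 = 0.
Proof.
move=> t0; case: HJ => _ B.
apply: (extF B) => i j it _; rewrite mul0mx; apply: kill => //.
exact: sortl.
Qed.

Lemma t0_triv : t = 0%N -> forall x : 'cV[k]_n, x = 0.
Proof.
move=> t0 x; case: HJ => _ /andP [/eqP E _].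
have : x \in fullv by exact: memvf.
rewrite -E /jordan_family t0 /= span_nil memv0 => /eqP //.
Qed.

Definition mm := (q + count (pred1 (a q)) lam).-1.

Lemma mm_facts : (q < t)%N -> [/\ (q <= mm)%N, (mm < t)%N & a mm = a q].
Proof.
move=> qt; set x := a q; set c := count (pred1 x) lam.
have c0 : (0 < c)%N.
  rewrite /c -has_count; apply/hasP; exists x; last exact: eqxx.
  rewrite /x; apply: (mem_nth 0%N qt).
have take0 : count (pred1 x) (take q lam) = 0%N.
  apply/eqP; rewrite -leqn0 leqNgt -has_count; apply/hasP => [[y yt /eqP eyx]].
  move: yt => /(nthP 0%N) [r]; rewrite size_take qt => rq.
  rewrite nth_take // => ery.
  case/andP: Hq => _ /or3P [/eqP q0|/eqP qt'|ne].
  - by move: rq; rewrite q0.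
  - by move: qt; rewrite qt' ltnn.
  have q1 : q = q.-1.+1 by case: (q) rq.
  have H1 : (a q.-1 <= a r)%N.
    apply: sortl; first by rewrite -ltnS -q1.
    by apply: leq_ltn_trans qt; apply: leq_pred.
  have H2 : (a q <= a q.-1)%N by apply: sortl => //; exact: leq_pred.
  move: ne H1; rewrite ery eyx /x => ne H1.
  by move: ne; rewrite eqn_leq H1 H2.
have cd : c = count (pred1 x) (drop q lam).
  by rewrite /c -{1}(cat_take_drop q lam) count_cat take0.
have Hmm : mm = (q + c.-1)%N.
  rewrite /mm -/x -/c; case: (c) c0 => // c' _.
  by rewrite addnS.
split.
- by rewrite Hmm leq_addr.
- rewrite Hmm -(subnKC (ltnW qt)) ltn_add2l.
  have := count_size (pred1 x) (drop q lam); rewrite -cd size_drop.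
  by case: (c) c0.
- have ps : path geq x (drop q.+1 lam).
    by have := drop_sorted q (proj1 Hpart); rewrite (drop_nth 0%N qt).
  rewrite Hmm -nth_drop cd; apply: prefix_count; last by rewrite -cd.
  by rewrite (drop_nth 0%N qt) /= leqnn ps.
Qed.

Lemma u_eq : u_vec lam v q = if (q < t)%N then v mm else 0.
Proof. by []. Qed.

Lemma Hu : X ^+ a mm *m u_vec lam v q = 0.
Proof.
rewrite u_eq; case: ifP => qt; last by rewrite mulmx0.
by case: (mm_facts qt) => _ mt _; apply: Hv.
Qed.


Lemma qle : (q <= t)%N.
Proof. by case/andP: Hq. Qed.

Lemma Hwhat (H : 'M[k]_n) (y : nat -> 'cV[k]_n) :
  H *m X = X *m H -> (forall i, (i < t)%N -> H *m v i = y i) ->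
  H *m w_hat X lam v q =
    \sum_(0 <= i < q) \sum_(1 <= j < a i) X ^+ j *m y i +
    \sum_(q <= i < t) \sum_(0 <= j < a i) X ^+ j *m y i.
Proof.
move=> HX Hy; rewrite /w_hat mulmxDr !mulmx_sumr; congr (_ + _).
  apply: eq_big_nat => i /andP [_ iq]; rewrite commX_sum // Hy //.
  exact: leq_trans iq qle.
by apply: eq_big_nat => i /andP [_ it]; rewrite commX_sum // Hy.
Qed.

Lemma sum_mx0 (a0 b0 : nat) : \sum_(a0 <= j < b0) X ^+ j *m (0 : 'cV[k]_n) = 0.
Proof. by apply: big1 => j _; rewrite mulmx0. Qed.

Lemma step_i (z : 'cV[k]_n) : exists H : 'M[k]_n, H *m X = X *m H /\ H *m w_hat X lam v q = u_vec lam v q + X *m z.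
Proof.
have [T0|tpos] := posnP t.
  exists 1%:M; split; first by rewrite mul1mx mulmx1.
  by rewrite (t0_triv T0 (1%:M *m _)) (t0_triv T0 (_ + _)).
have Xz0 := Xzero tpos.
set u := u_vec lam v q.
have [q0|qpos] := posnP q.
  set w := u + X *m z.
  pose y := fun i => if i == 0%N then w - X *m w else 0.
  have [|H [HX Hy]] := @ext_exists _ _ X lam v (proj2 HJ) y posl Hv.
    move=> i it; rewrite /y; case: ifP => [/eqP -> | _]; last by rewrite mulmx0.
    by rewrite Xz0 mul0mx.
  exists H; split => //.
  rewrite (Hwhat HX Hy) q0 big_geq // add0r (@sum_single _ _ _ 0%N); last first.
    by move=> i _ ne; rewrite /y (negbTE ne) sum_mx0.
    by rewrite tpos.
  by rewrite /y eqxx tele Xz0 mul0mx subr0.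
pose y := fun i => if i == 0%N then z - X *m z else if i == mm then u - X *m u else 0.
have Hu' : X ^+ a (mm) *m (u - X *m u) = 0.
  rewrite mulmxBr [X ^+ _ *m (X *m _)]mulmxA -exprSmr exprSm -mulmxA.
  by rewrite /u Hu mulmx0 subr0.
have [|H [HX Hy]] := @ext_exists _ _ X lam v (proj2 HJ) y posl Hv.
  move=> i it; rewrite /y; case: ifP => [/eqP -> | _]; first by rewrite Xz0 mul0mx.
  by case: ifP => [/eqP -> // | _]; rewrite mulmx0.
exists H; split => //.
rewrite (Hwhat HX Hy) (@sum_single _ _ _ 0%N); last first.
    move=> i /andP [_ iq] ne; rewrite /y (negbTE ne).
    case: ifP => [/eqP eim|_]; last by rewrite sum_mx0.
    have [qt|qt] := ltnP q t.
      by case: (mm_facts qt) => qm _ _; move: iq; rewrite eim ltnNge qm.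
    by rewrite /u u_eq ltnNge qt /= mulmx0 subr0 sum_mx0.
  by rewrite qpos.
rewrite /y eqxx tele1 ?posl // Xz0 mul0mx subr0 addrC; congr (_ + _).
have [qt|qt] := ltnP q t; last first.
  by rewrite big_geq // /u u_eq ltnNge qt.
have [qm mt am] := mm_facts qt.
rewrite (@sum_single _ _ _ (mm)); last first.
    move=> i /andP [qi _] ne; rewrite (negbTE ne).
    have -> : (i == 0%N) = false by apply/negbTE; rewrite -lt0n; exact: leq_trans qi.
    by rewrite sum_mx0.
  by rewrite qm mt.
have -> : (mm == 0%N) = false by apply/negbTE; rewrite -lt0n; exact: leq_trans qm.
by rewrite eqxx tele /u Hu subr0.
Qed.

Lemma step_ii : exists (z0 : 'cV[k]_n) (H : 'M[k]_n), H *m X = X *m H /\ H *m (u_vec lam v q + X *m z0) = w_hat X lam v q.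
Proof.
set u := u_vec lam v q.
pose Wq := \sum_(q <= i < t) \sum_(0 <= j < a i) X ^+ j *m v i.
pose y := fun i => if (i < q)%N then v i else if i == mm then Wq else 0.
have [|H [HX Hy]] := @ext_exists _ _ X lam v (proj2 HJ) y posl Hv.
  move=> i it; rewrite /y; case: ifP => [iq | _]; first exact: Hv.
  case: ifP => [/eqP -> | _]; last by rewrite mulmx0.
  rewrite mulmx_sumr; apply: sum_zero => i' /andP [qi i't].
  have qt : (q < t)%N by exact: leq_ltn_trans i't.
  have [_ _ am] := mm_facts qt.
  rewrite mulmx_sumr; apply: big1 => j _; apply: kill => //.
  by rewrite am; apply: sortl.
pose z0 := \sum_(0 <= i < q) \sum_(0 <= j < (a i).-1) X ^+ j *m v i.
exists z0, H; split => //.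
have Hz0 : H *m z0 = z0.
  rewrite /z0 mulmx_sumr; apply: eq_big_nat => i /andP [_ iq].
  rewrite commX_sum // Hy; last exact: leq_trans iq qle.
  by rewrite /y iq.
have Hu0 : H *m u = Wq.
  rewrite /u u_eq; case: ifP => qt; last by rewrite mulmx0 /Wq big_geq // leqNgt qt.
  have [qm mt _] := mm_facts qt.
  by rewrite Hy // /y ltnNge qm eqxx.
rewrite mulmxDr mulmxA HX -mulmxA Hz0 Hu0 /w_hat addrC; congr (_ + _).
rewrite /z0 mulmx_sumr; apply: eq_big_nat => i /andP [_ iq].
have ai : (0 < a i)%N by apply: posl; exact: leq_trans iq qle.
rewrite mulmx_sumr big_add1; apply: eq_bigr => j _.
by rewrite exprSm mulmxA.
Qed.

End Main.

Theorem proposition4p12 (k : closedFieldType) (n : nat) (lam : seq nat)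
  (q : nat) (X : 'M[k]_n) (v : nat -> 'cV[k]_n) :
  is_partition n lam ->
  enhanced_index lam q ->
  jordan_basis X lam v ->
  forall p : 'M[k]_n * 'cV[k]_n,
    zclosure (O_enh X lam v q) p <-> zclosure (G_orbit X (w_hat X lam v q)) p.
Proof.
move=> Hp Hq HJ p; split; apply: zcl_sub => x.
- case=> g [vv [gU ->]].
  have [H [HX HH]] := step_i Hp Hq HJ (- (invmx g *m vv)).
  have Hyp : forall g', g' \in unitmx ->
      G_orbit X (w_hat X lam v q) (g' *m X *m invmx g', g' *m w_hat X lam v q).
    by move=> g' g'U; exists g'.
  have := @curveC _ _ (G_orbit X (w_hat X lam v q)) X H (w_hat X lam v q) HX Hyp g gU.
  have E : g *m (u_vec lam v q + X *m - (invmx g *m vv)) =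
      - (g *m X *m invmx g *m vv) + g *m u_vec lam v q.
    by rewrite mulmxDr addrC !mulmxN !mulmxA.
  by rewrite HH E.
- case=> g [gU ->].
  have [z0 [H [HX HH]]] := step_ii Hp Hq HJ.
  have Hyp : forall g', g' \in unitmx ->
      O_enh X lam v q (g' *m X *m invmx g', g' *m (u_vec lam v q + X *m z0)).
    move=> g' g'U; exists g', (- (g' *m z0)); split => //.
    congr (_, _).
    by rewrite mulmxN opprK mulmxDr addrC [in RHS]mulmxA mulmxKV // mulmxA.
  by have := @curveC _ _ (O_enh X lam v q) X H (u_vec lam v q + X *m z0) HX Hyp g gU; rewrite HH.
Qed.
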